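(* Let $\mathcal{X}\subseteq\mathbb{R}^d$, let $\mathcal{D}$ be any distribution over pairs $(x,y)$ with $x\in\mathcal{X}$ and $y\in\{1,\dots,k\}$, and let $h:\mathcal{X}\to\{-1,1\}$ be any hypothesis. Let $\pi_i=P(y=i)$, and define \[ J(h)=2\sum_{i=1}^k \pi_i\,\bigl|P(h(x)>0)-P(h(x)>0\mid i)\bigr|. \] Then $J(h)\in[0,1]$. Furthermore, $J(h)=1$ if and only if $h$ induces a partition that is both maximally pure and maximally balanced, i.e. $\alpha=0$ and $\beta=1/2$, where $\alpha=\sum_{i=1}^k\pi_i\min\bigl(P(h(x)>0\mid i),P(h(x)<0\mid i)\bigr)$ and $\beta=P(h(x)>0)$.
   Context: $P(h(x)>0\mid i)$ denotes the probability that $h(x)>0$ conditional on the label being $i$. The quantity $\alpha$ is called the purity factor and $\beta$ the balancing factor. A partition is maximally pure if $\alpha=0$, meaning each class is sent exclusively to one side. It is maximally balanced if $\beta=1/2$. *)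

(* Defs.v *)
From HB Require Import structures.
From mathcomp Require Import all_boot all_order all_algebra.
From mathcomp Require Import all_classical all_reals all_analysis.
Set Implicit Arguments. Unset Strict Implicit. Unset Printing Implicit Defensive.
Import Order.TTheory GRing.Theory Num.Theory.
Local Open Scope classical_set_scope.
Local Open Scope ring_scope.

(* The distribution D over pairs (x, y) is represented as the joint law of
   random variables X : T -> 'rV[R]_d and Y : T -> 'I_k on a probability
   space (T, P).  Labels 1..k are represented by 'I_k = {0..k-1}. *)

Section PurityBalance.
Context {d0 : measure_display} {T : measurableType d0} {R : realType}.
Variables (P : probability T R) (d k : nat)
  (X : T -> 'rV[R]_d) (Y : T -> 'I_k) (h : 'rV[R]_d -> R).

Definition pr (A : set T) : R := fine (P A).

Definition ev_pos : set T := [set t | 0 < h (X t)].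
Definition ev_neg : set T := [set t | h (X t) < 0].
Definition ev_lab (i : 'I_k) : set T := [set t | Y t = i].

Definition prior (i : 'I_k) : R := pr (ev_lab i).

(* conditional probability P(A | y = i); (value 0 when pi_i = 0, which is
   irrelevant since it is always multiplied by pi_i) *)
Definition pcond (A : set T) (i : 'I_k) : R := pr (A `&` ev_lab i) / prior i.

Definition balance : R := pr ev_pos.

Definition purity : R :=
  \sum_(i < k) prior i * Num.min (pcond ev_pos i) (pcond ev_neg i).

Definition Jobj : R :=
  2 * \sum_(i < k) prior i * `| balance - pcond ev_pos i |.

End PurityBalance.

(* Main.v *)
Require Import Defs.
From HB Require Import structures.
From mathcomp Require Import all_boot all_order all_algebra.
From mathcomp Require Import all_classical all_reals all_analysis.
Import Order.TTheory GRing.Theory Num.Theory.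
Local Open Scope classical_set_scope.
Local Open Scope ring_scope.
From mathcomp Require Import lra.
Lemma divz (R : realFieldType) (p pi : R) : pi != 0 -> pi * (p / pi) = p.
Proof. by move=> h; rewrite mulrC divfK. Qed.

Lemma term_id (R : realFieldType) (b p q : R) : 0 <= p -> 0 <= q ->
  (p + q) * `|b - p / (p + q)| = `|b * q - (1 - b) * p|.
Proof.
move=> hp hq; have [e|nz] := eqVneq (p + q) 0.
  have p0 : p = 0 by lra. have q0 : q = 0 by lra.
  by rewrite e p0 q0 !(mulr0, mul0r) subr0 normr0.
have pos : 0 < p + q by rewrite lt_neqAle eq_sym nz addr_ge0.
rewrite -{1}(ger0_norm (ltW pos)) -normrM mulrBr divz //; congr `|_|; lra.
Qed.

Lemma term_le (R : realFieldType) (b p q : R) : 0 <= p -> 0 <= q -> 0 <= b <= 1 ->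
  (p + q) * `|b - p / (p + q)| <= b * q + (1 - b) * p.
Proof.
move=> hp hq /andP[b0 b1]; rewrite term_id //.
have h1 : 0 <= b * q by rewrite mulr_ge0.
have h2 : 0 <= (1 - b) * p by rewrite mulr_ge0 // subr_ge0.
rewrite ler_norml; apply/andP; split; lra.
Qed.

Lemma min0 (R : realDomainType) (a b : R) : 0 <= a -> 0 <= b ->
  (Num.min a b == 0) = (a == 0) || (b == 0).
Proof.
move=> ha hb; case: (leP a b) => hab.
  apply/idP/idP => [->//|/orP[//|/eqP b0]]; apply/eqP; lra.
apply/idP/idP => [->|/orP[/eqP a0|//]]; rewrite ?orbT //; apply/eqP; lra.
Qed.

Lemma term_min (R : realFieldType) (p q : R) : 0 <= p -> 0 <= q ->
  (p + q) * Num.min (p / (p + q)) (q / (p + q)) = Num.min p q.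
Proof.
move=> hp hq; have [e|nz] := eqVneq (p + q) 0.
  have p0 : p = 0 by lra. have q0 : q = 0 by lra.
  by rewrite e p0 q0 mul0r minxx.
have pos : 0 < p + q by rewrite lt_neqAle eq_sym nz addr_ge0.
by rewrite minr_pMr ?(ltW pos) // !divz.
Qed.

Lemma term_eq (R : realFieldType) (p q : R) : 0 <= p -> 0 <= q ->
  ((p + q) * `|1/2 - p / (p + q)| = (p + q) / 2) <->
  ((p + q) * Num.min (p / (p + q)) (q / (p + q)) = 0).
Proof.
move=> hp hq; rewrite term_id // term_min //.
case: (leP p q) => hpq.
  rewrite ger0_norm; last lra.
  split; lra.
rewrite ler0_norm; last lra.
split; lra.
Qed.
Lemma alg_main (R : realFieldType) (k : nat) (p q : 'I_k -> R) (b : R)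
  (hp : forall i, 0 <= p i) (hq : forall i, 0 <= q i)
  (hb : b = \sum_(i < k) p i) (h1 : \sum_(i < k) (p i + q i) = 1) :
  let J := 2 * \sum_(i < k) (p i + q i) * `|b - p i / (p i + q i)| in
  let Pu := \sum_(i < k) (p i + q i) * Num.min (p i / (p i + q i)) (q i / (p i + q i)) in
  (0 <= J <= 1) /\ (J = 1 <-> Pu = 0 /\ b = 1 / 2).
Proof.
move=> J Pu.
have sq : \sum_(i < k) q i = 1 - b.
  rewrite hb -h1 big_split /=; lra.
have b0 : 0 <= b by rewrite hb; apply: sumr_ge0.
have b1 : b <= 1.
  have : 0 <= \sum_(i < k) q i by apply: sumr_ge0.
  lra.
have tge0 i : 0 <= (p i + q i) * `|b - p i / (p i + q i)|.
  by rewrite mulr_ge0 ?addr_ge0.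
have J0 : 0 <= J by rewrite mulr_ge0 //; apply: sumr_ge0.
have Jle : J <= 4 * b * (1 - b).
  have : \sum_(i < k) (p i + q i) * `|b - p i / (p i + q i)| <=
         \sum_(i < k) (b * q i + (1 - b) * p i).
    by apply: ler_sum => i _; apply: term_le => //; rewrite b0 b1.
  rewrite big_split /= -!mulr_sumr sq -hb /J; nra.
have sqb : 0 <= (2 * b - 1) ^+ 2 by apply: sqr_ge0.
have Jle1 : J <= 1 by rewrite expr2 in sqb; nra.
split; first by rewrite J0 Jle1.
split.
- move=> J1.
  have bh : b = 1 / 2 by nra.
  have each : forall i, (p i + q i) * `|b - p i / (p i + q i)| = (p i + q i) / 2.
    move=> i.
    have : \sum_(j < k) ((p j + q j) / 2 - (p j + q j) * `|b - p j / (p j + q j)|) = 0.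
      rewrite sumrB -mulr_suml h1.
      have : \sum_(j < k) (p j + q j) * `|b - p j / (p j + q j)| = 1/2 by rewrite /J in J1; lra.
      move=> ->; lra.
    move/eqP; rewrite psumr_eq0; last first.
      move=> j _; rewrite subr_ge0 bh.
      have := @term_le _ (1/2) (p j) (q j) (hp j) (hq j).
      have -> : 1 / 2 * q j + (1 - 1 / 2) * p j = (p j + q j) / 2 by lra.
      by apply; lra.
    move/allP => /(_ i (mem_index_enum _)) /eqP; rewrite bh; lra.
  split => //; apply/eqP; rewrite psumr_eq0; last first.
    move=> i _; rewrite mulr_ge0 ?addr_ge0 //.
    by rewrite le_min !divr_ge0 ?addr_ge0.
  apply/allP => i _; apply/eqP; apply/term_eq => //.
  by rewrite -bh each.
- case=> P0 bh.
  have each : forall i, (p i + q i) * `|b - p i / (p i + q i)| = (p i + q i) / 2.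
    move=> i; rewrite bh; apply/term_eq => //.
    move/eqP: P0; rewrite psumr_eq0; last first.
      move=> j _; rewrite mulr_ge0 ?addr_ge0 //.
      by rewrite le_min !divr_ge0 ?addr_ge0.
    by move/allP => /(_ i (mem_index_enum _)) /eqP.
  rewrite /J (eq_bigr _ (fun i _ => each i)) -mulr_suml h1; lra.
Qed.
Lemma in_bigU (T : Type) (I : eqType) (r : seq I) (F : I -> set T) (t : T) :
  (\big[setU/set0]_(i <- r) F i) t <-> exists2 i, i \in r & F i t.
Proof.
elim: r => [|a r IH]; first by rewrite big_nil; split => // [[]].
rewrite big_cons; split.
  case => [h|/IH [i hi hF]]; first by exists a => //; rewrite inE eqxx.
  by exists i => //; rewrite inE hi orbT.
case=> i; rewrite inE => /orP [/eqP ->|hi] hF; first by left.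
by right; apply/IH; exists i.
Qed.

Section M.
Context (d0 : measure_display) (T : measurableType d0) (R : realType)
  (P : probability T R) (k : nat) (Y : T -> 'I_k)
  (mY : forall i : 'I_k, measurable [set t | Y t = i]).

Lemma pr_ge0 (A : set T) : 0 <= pr P A.
Proof. by apply: fine_ge0; apply: measure_ge0. Qed.

Lemma pr_split (A B : set T) : measurable A -> measurable B ->
  pr P A = pr P (A `\` B) + pr P (A `&` B).
Proof.
move=> mA mB; rewrite /pr (measureDI P mA mB) fineD //;
  apply: fin_num_measure; [exact: measurableD|exact: measurableI].
Qed.

Lemma pr_sum (A : set T) : measurable A ->
  \sum_(i < k) pr P (A `&` ev_lab Y i) = pr P A.
Proof.
move=> mA; rewrite /pr sum_fine; last first.
  move=> i _; apply: fin_num_measure; apply: measurableI => //; exact: mY.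
rewrite -measure_bigsetU_ord.
- congr (fine (P _)); apply/seteqP; split => t.
    by move=> /in_bigU [i _ []].
  move=> At; apply/in_bigU; exists (Y t); last by split.
  exact: mem_index_enum.
- by move=> i; apply: measurableI => //; exact: mY.
- move=> i j _ _ [t [[_ hi] [_ hj]]]; by rewrite -hi -hj.
Qed.
End M.

Theorem lemma1 (d0 : measure_display) (T : measurableType d0) (R : realType)
  (P : probability T R) (d k : nat) (Xs : set 'rV[R]_d)
  (X : T -> 'rV[R]_d) (Y : T -> 'I_k) (h : 'rV[R]_d -> R)
  (hX : forall t, Xs (X t))
  (hh : forall v, Xs v -> h v = 1 \/ h v = -1)
  (mY : forall i : 'I_k, measurable [set t | Y t = i])
  (mh : measurable [set t | 0 < h (X t)]) :
  (0 <= Jobj P X Y h <= 1) /\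
  (Jobj P X Y h = 1 <->
     purity P X Y h = 0 /\ balance P X h = 1 / 2).
Proof.
pose p i := pr P (ev_pos X h `&` ev_lab Y i).
pose q i := pr P (ev_neg X h `&` ev_lab Y i).
have hpr i : prior P Y i = p i + q i.
  have e1 : ev_lab Y i `\` ev_pos X h = ev_neg X h `&` ev_lab Y i.
    apply/seteqP; split => t.
      move=> [hl /= hnp]; split => //; rewrite /ev_neg /=.
      have hle : h (X t) <= 0 by rewrite leNgt; apply/negP.
      case: (hh _ (hX t)) => e; rewrite e in hle *; lra.
    move=> [hn hl]; split => //; rewrite /ev_pos /=; apply/negP; rewrite -leNgt.
    by rewrite /ev_neg /= in hn; apply: ltW.
  have e2 : ev_lab Y i `&` ev_pos X h = ev_pos X h `&` ev_lab Y i by rewrite setIC.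
  by rewrite /prior (pr_split _ _ _ P _ _ (mY i) mh) e1 e2 addrC.
have hb : balance P X h = \sum_(i < k) p i.
  by rewrite /balance /p (pr_sum _ _ _ P _ _ mY) //.
have h1 : \sum_(i < k) (p i + q i) = 1.
  under eq_bigr do rewrite -hpr.
  rewrite /prior /ev_lab.
  have := pr_sum _ _ _ P _ _ mY _ measurableT; rewrite /pr probability_setT /= => <-.
  by apply: eq_bigr => i _; rewrite setTI.
have := @alg_main _ _ p q _ (fun i => pr_ge0 _ _ _ P _) (fun i => pr_ge0 _ _ _ P _) hb h1.
have eJ : Jobj P X Y h = 2 * \sum_(i < k) (p i + q i) *
    `|balance P X h - p i / (p i + q i)|.
  by rewrite /Jobj /pcond; congr (_ * _); apply: eq_bigr => i _; rewrite hpr.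
have eP : purity P X Y h = \sum_(i < k) (p i + q i) *
    Num.min (p i / (p i + q i)) (q i / (p i + q i)).
  by rewrite /purity /pcond; apply: eq_bigr => i _; rewrite hpr.
by rewrite /= eJ eP.
Qed.
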